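(* Let $C\in\mathbb{R}^{p\times p}$ be positive definite, $w\in\mathbb{R}^p$, $\mu>0$ and $\tau>0$. Let $\mathcal{D}=\{z\in\mathbb{C}^p : |\operatorname{Re} z_j|<\mu,\ j=1,\dots,p\}$ and define on $\mathcal{D}$ the holomorphic function $$H_\tau(z)=(z-w)^TC^{-1}(z-w)-\frac1\tau\sum_{j=1}^p\ln(\mu^2-z_j^2).$$ Then $H_\tau$ has a unique saddle point (critical point) $\hat u_\tau$ in $\mathcal{D}$. This saddle point is real, $\hat u_\tau\in\mathcal{D}\cap\mathbb{R}^p$, and it is a solution $u\in\mathbb{R}^p$ of the system of cubic equations $$(\mu^2-u_j^2)\,[C^{-1}(w-u)]_j-\frac{u_j}{\tau}=0,\qquad j=1,\dots,p.$$
   Context: Here $\ln$ denotes the principal branch of the logarithm; on $\mathcal{D}$ one has $\operatorname{Re}(\mu^2-z_j^2)$ avoiding the branch issues because $|\operatorname{Re} z_j|<\mu$ (equivalently, $\ln(\mu^2-z_j^2)=\ln(\mu-z_j)+\ln(\mu+z_j)$ with both arguments having positive real part). A saddle point means a point $z\in\mathcal{D}$ with $\nabla H_\tau(z)=0$. *)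

(* Defs.v *)
From Stdlib Require Import Reals Lra.
Open Scope R_scope.

Definition Cx : Type := (R * R)%type.
Definition Re (z : Cx) : R := fst z.
Definition Im (z : Cx) : R := snd z.
Definition RtoC (x : R) : Cx := (x, 0).
Definition Cadd (a b : Cx) : Cx := (Re a + Re b, Im a + Im b).
Definition Copp (a : Cx) : Cx := (- Re a, - Im a).
Definition Csub (a b : Cx) : Cx := Cadd a (Copp b).
Definition Cmul (a b : Cx) : Cx :=
  (Re a * Re b - Im a * Im b, Re a * Im b + Im a * Re b).
Definition Cinv (a : Cx) : Cx :=
  (Re a / (Re a ^ 2 + Im a ^ 2), - Im a / (Re a ^ 2 + Im a ^ 2)).
Definition Cdiv (a b : Cx) : Cx := Cmul a (Cinv b).
Definition Cmod (a : Cx) : R := sqrt (Re a ^ 2 + Im a ^ 2).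

Definition Carg (z : Cx) : R :=
  let x := Re z in let y := Im z in
  if Rlt_dec 0 x then atan (y / x)
  else if Rlt_dec x 0 then
         (if Rle_dec 0 y then atan (y / x) + PI else atan (y / x) - PI)
  else if Rlt_dec 0 y then PI / 2
  else if Rlt_dec y 0 then - (PI / 2)
  else 0.

Definition Cln (z : Cx) : Cx := (ln (Cmod z), Carg z).

Fixpoint sumR (n : nat) (f : nat -> R) : R :=
  match n with O => 0 | S m => sumR m f + f m end.
Fixpoint sumC (n : nat) (f : nat -> Cx) : Cx :=
  match n with O => RtoC 0 | S m => Cadd (sumC m f) (f m) end.

Definition symmetric (p : nat) (C : nat -> nat -> R) : Prop :=
  forall i j, (i < p)%nat -> (j < p)%nat -> C i j = C j i.

Definition pos_def (p : nat) (C : nat -> nat -> R) : Prop :=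
  symmetric p C /\
  forall x : nat -> R, (exists j, (j < p)%nat /\ x j <> 0) ->
    0 < sumR p (fun i => sumR p (fun k => x i * C i k * x k)).

Definition is_inverse (p : nat) (C Ci : nat -> nat -> R) : Prop :=
  forall i j, (i < p)%nat -> (j < p)%nat ->
    sumR p (fun k => C i k * Ci k j) = (if Nat.eq_dec i j then 1 else 0) /\
    sumR p (fun k => Ci i k * C k j) = (if Nat.eq_dec i j then 1 else 0).

Definition inD (p : nat) (mu : R) (z : nat -> Cx) : Prop :=
  forall j, (j < p)%nat -> Rabs (Re (z j)) < mu.

Definition H_tau (p : nat) (Ci : nat -> nat -> R) (w : nat -> R) (mu tau : R)
  (z : nat -> Cx) : Cx :=
  Csub
    (sumC p (fun i => sumC p (fun k =>
        Cmul (Cmul (Csub (z i) (RtoC (w i))) (RtoC (Ci i k)))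
             (Csub (z k) (RtoC (w k))))))
    (Cmul (RtoC (/ tau))
       (sumC p (fun j => Cln (Csub (RtoC (mu ^ 2)) (Cmul (z j) (z j)))))).

Definition shift (z : nat -> Cx) (j : nat) (h : Cx) : nat -> Cx :=
  fun k => if Nat.eq_dec k j then Cadd (z k) h else z k.

Definition has_cpderiv (F : (nat -> Cx) -> Cx) (z : nat -> Cx) (j : nat) (d : Cx)
  : Prop :=
  forall eps, 0 < eps -> exists delta, 0 < delta /\
    forall h : Cx, 0 < Cmod h < delta ->
      Cmod (Csub (Cdiv (Csub (F (shift z j h)) (F z)) h) d) < eps.

Definition is_critical (p : nat) (F : (nat -> Cx) -> Cx) (z : nat -> Cx) : Prop :=
  forall j, (j < p)%nat -> has_cpderiv F z j (RtoC 0).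

(* Main.v *)
From Coquelicot Require Import Coquelicot.
From Stdlib Require Import Reals Lra Lia Psatz ClassicalEpsilon.
Require Import Defs.
Open Scope R_scope.

Lemma cadd_e a b : Cadd a b = Complex.Cplus a b. Proof. reflexivity. Qed.
Lemma copp_e a : Defs.Copp a = Complex.Copp a. Proof. reflexivity. Qed.
Lemma csub_e a b : Csub a b = Complex.Cminus a b. Proof. reflexivity. Qed.
Lemma cmul_e a b : Cmul a b = Complex.Cmult a b. Proof. reflexivity. Qed.
Lemma cinv_e a : Defs.Cinv a = Complex.Cinv a. Proof. reflexivity. Qed.
Lemma cdiv_e a b : Defs.Cdiv a b = Complex.Cdiv a b. Proof. reflexivity. Qed.
Lemma cmod_e a : Defs.Cmod a = Complex.Cmod a. Proof. reflexivity. Qed.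
Lemma rtoc_e x : Defs.RtoC x = Complex.RtoC x. Proof. reflexivity. Qed.

Local Open Scope C_scope.
Notation C0 := (Complex.RtoC 0).
Ltac toC0 := repeat match goal with
  | |- context [Cadd ?a ?b] => change (Cadd a b) with (Complex.Cplus a b)
  | |- context [Csub ?a ?b] => change (Csub a b) with (Complex.Cminus a b)
  | |- context [Cmul ?a ?b] => change (Cmul a b) with (Complex.Cmult a b)
  | |- context [Defs.Cdiv ?a ?b] => change (Defs.Cdiv a b) with (Complex.Cdiv a b)
  | |- context [Defs.Cinv ?a] => change (Defs.Cinv a) with (Complex.Cinv a)
  | |- context [Defs.Copp ?a] => change (Defs.Copp a) with (Complex.Copp a)
  | |- context [Defs.RtoC ?a] => change (Defs.RtoC a) with (Complex.RtoC a)
  | |- context [Defs.Cmod ?a] => change (Defs.Cmod a) with (Complex.Cmod a)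
  end.
Ltac toC := toC0; match goal with |- @eq _ ?a ?b => change (@eq Complex.C a b) end.
Ltac cring := toC; ring.
Ltac cfield := toC; field.

Lemma sumC_ext n (f g : nat -> Complex.C) : (forall k, (k < n)%nat -> f k = g k) -> sumC n f = sumC n g.
Proof. induction n; simpl; intros H; auto. rewrite IHn by (intros; apply H; lia). rewrite H by lia. auto. Qed.

Lemma sumC_plus n (f g : nat -> Complex.C) : sumC n (fun k => f k + g k) = sumC n f + sumC n g.
Proof. induction n; simpl. - rewrite rtoc_e. apply injective_projections; simpl; lra.
  - toC0. rewrite IHn. cring. Qed.

Lemma sumC_scal n (c : Complex.C) (f : nat -> Complex.C) : sumC n (fun k => c * f k) = c * sumC n f.
Proof. induction n; simpl. - rewrite rtoc_e. cring.
  - toC0. rewrite IHn. cring. Qed.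

Lemma sumC_zero n : sumC n (fun _ => Complex.RtoC 0) = Complex.RtoC 0.
Proof. induction n; simpl. - reflexivity. - toC0. rewrite IHn. cring. Qed.

Lemma sumC_delta n j (f : nat -> Complex.C) : (j < n)%nat ->
  sumC n (fun k => if Nat.eq_dec k j then f k else C0) = f j.
Proof. induction n; intros H; [lia|]. simpl. toC0.
  destruct (Nat.eq_dec n j).
  - subst. rewrite (sumC_ext _ _ (fun _ => Complex.RtoC 0)). rewrite sumC_zero. cring.
    intros k Hk. destruct (Nat.eq_dec k j); [lia|auto].
  - rewrite IHn by lia. cring. Qed.

Lemma sumC_one n j (f g : nat -> Complex.C) : (j < n)%nat -> (forall k, (k < n)%nat -> k <> j -> f k = g k) ->
  sumC n f - sumC n g = f j - g j.
Proof. intros Hj H.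
  assert (E: forall k, (k<n)%nat -> f k = g k + (if Nat.eq_dec k j then f k - g k else C0)).
  { intros k Hk. destruct (Nat.eq_dec k j). subst; cring. rewrite H by auto. cring. }
  rewrite (sumC_ext _ _ _ E), sumC_plus, sumC_delta by auto. cring. Qed.

Lemma fst_sumC n f : fst (sumC n f) = sumR n (fun k => fst (f k)).
Proof. induction n; [reflexivity|]. simpl sumR. rewrite <- IHn. reflexivity. Qed.
Lemma snd_sumC n f : snd (sumC n f) = sumR n (fun k => snd (f k)).
Proof. induction n; [reflexivity|]. simpl sumR. rewrite <- IHn. reflexivity. Qed.

Local Close Scope C_scope.

Local Open Scope C_scope.

Definition Qf (p : nat) (Ci : nat -> nat -> R) (w : nat -> R) (z : nat -> Cx) : Cx :=
  sumC p (fun i => sumC p (fun k =>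
        Cmul (Cmul (Csub (z i) (RtoC (w i))) (RtoC (Ci i k)))
             (Csub (z k) (RtoC (w k))))).

Lemma quad_diff p Ci w z j h : (j < p)%nat ->
  Qf p Ci w (shift z j h) - Qf p Ci w z =
  h * (sumC p (fun k => Ci j k * (z k - w k)) + sumC p (fun i => (z i - w i) * Ci i j)
       + h * Ci j j).
Proof. intros Hj. unfold Qf.
  set (a := fun i => z i - w i).
  set (d := fun i => if Nat.eq_dec i j then h else C0).
  assert (Hs : forall i, Csub (shift z j h i) (RtoC (w i)) = a i + d i).
  { intros i. unfold shift, a, d. rewrite csub_e, rtoc_e. destruct (Nat.eq_dec i j).
    rewrite cadd_e. cring. cring. }
  rewrite (sumC_ext _ _ (fun i => sumC p (fun k => a i * Ci i k * a k)
      + (if Nat.eq_dec i j then h * sumC p (fun k => Ci i k * (a k + d k)) else C0)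
      + sumC p (fun k => if Nat.eq_dec k j then a i * Ci i k * h else C0))).
  2:{ intros i Hi. destruct (Nat.eq_dec i j).
      - rewrite <- sumC_scal, <- !sumC_plus.
        apply sumC_ext. intros k Hk. rewrite !Hs. unfold d.
        destruct (Nat.eq_dec k j), (Nat.eq_dec i j); try lia; unfold a; cring.
      - rewrite Cplus_0_r, <- sumC_plus. apply sumC_ext. intros k Hk.
        rewrite !Hs. unfold d.
        destruct (Nat.eq_dec k j), (Nat.eq_dec i j); try lia; unfold a; cring. }
  rewrite !sumC_plus. rewrite sumC_delta by auto.
  rewrite (sumC_ext p (fun i => sumC p (fun k => if Nat.eq_dec k j then a i * Ci i k * h else C0))
     (fun i => a i * Ci i j * h)).
  2:{ intros i Hi. apply (sumC_delta p j (fun k => a i * Ci i k * h)). auto. }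
  rewrite (sumC_ext p (fun k => Ci j k * (a k + d k)) (fun k => Ci j k * a k + (if Nat.eq_dec k j then Ci j k * h else C0))).
  2:{ intros k Hk. unfold d. destruct (Nat.eq_dec k j); cring. }
  rewrite sumC_plus, sumC_delta by auto.
  rewrite (sumC_ext p (fun i => sumC p (fun k => Cmul (Cmul (Csub (z i) (RtoC (w i))) (RtoC (Ci i k))) (Csub (z k) (RtoC (w k)))))
    (fun i => sumC p (fun k => a i * Ci i k * a k))).
  2:{ intros i Hi. apply sumC_ext. intros k Hk. rewrite !cmul_e, !csub_e, !rtoc_e. reflexivity. }
  rewrite (sumC_ext p (fun i => a i * Ci i j * h) (fun i => h * (a i * Ci i j))) by (intros; cring).
  rewrite sumC_scal. unfold a. cring.
Qed.

Local Close Scope C_scope.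

Lemma abs_fst_le_cmod (k : Complex.C) : Rabs (fst k) <= Complex.Cmod k.
Proof. pose proof (Rmax_Cmod k). pose proof (Rmax_l (Rabs (fst k)) (Rabs (snd k))). lra. Qed.
Lemma abs_snd_le_cmod (k : Complex.C) : Rabs (snd k) <= Complex.Cmod k.
Proof. pose proof (Rmax_Cmod k). pose proof (Rmax_r (Rabs (fst k)) (Rabs (snd k))). lra. Qed.


Lemma cmod_le_sum (k : Complex.C) : Complex.Cmod k <= Rabs (fst k) + Rabs (snd k).
Proof. unfold Complex.Cmod. rewrite <- (sqrt_Rsqr (Rabs (fst k) + Rabs (snd k))).
  2:{ pose proof (Rabs_pos (fst k)); pose proof (Rabs_pos (snd k)); lra. }
  apply sqrt_le_1_alt. unfold Rsqr.
  pose proof (Rabs_pos (fst k)); pose proof (Rabs_pos (snd k)).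
  rewrite <- (pow2_abs (fst k)), <- (pow2_abs (snd k)). nra.
Qed.

Lemma d_F1 a b k1 k2 t : 0 < a + t*k1 ->
  derivable_pt_lim (fun t => ln (sqrt ((a + t*k1)^2 + (b+t*k2)^2))) t
  (((a+t*k1)*k1 + (b+t*k2)*k2)/((a+t*k1)^2 + (b+t*k2)^2)).
Proof. intros H. apply is_derive_Reals.
  assert (HQ: 0 < (a + t * k1) * ((a + t * k1) * 1) + (b + t * k2) * ((b + t * k2) * 1)) by (rewrite !Rmult_1_r; pose proof (Rle_0_sqr (b+t*k2)); unfold Rsqr in *; nra).
  auto_derive.
  - repeat split; auto; apply sqrt_lt_R0; auto.
  - set (Q := (a + t * k1) * ((a + t * k1) * 1) + (b + t * k2) * ((b + t * k2) * 1)) in *.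
    assert (Hs : sqrt Q * sqrt Q = Q) by (apply sqrt_sqrt; lra).
    assert (Hs0 : 0 < sqrt Q) by (apply sqrt_lt_R0; auto).
    replace ((a+t*k1)^2 + (b+t*k2)^2) with (sqrt Q * sqrt Q) by (rewrite Hs; unfold Q; ring).
    field. lra.
Qed.

Lemma d_F2 a b k1 k2 t : 0 < a + t*k1 ->
  derivable_pt_lim (fun t => atan ((b+t*k2)/(a + t*k1))) t
  (((a+t*k1)*k2 - (b+t*k2)*k1)/((a+t*k1)^2 + (b+t*k2)^2)).
Proof. intros H. apply is_derive_Reals. auto_derive. lra.
  field. split; [|lra]. pose proof (Rle_0_sqr (b+t*k2)). unfold Rsqr in *. nra.
Qed.

Local Open Scope C_scope.

Lemma cdiv_fst (k1 k2 x y : R) : (0 < x)%R ->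
  fst (Complex.Cdiv (k1, k2) (x, y)) = ((x*k1 + y*k2)/(x^2+y^2))%R.
Proof. intros. unfold Complex.Cdiv, Complex.Cmult, Complex.Cinv; simpl. field.
  pose proof (Rle_0_sqr y). unfold Rsqr in *. nra. Qed.
Lemma cdiv_snd (k1 k2 x y : R) : (0 < x)%R ->
  snd (Complex.Cdiv (k1, k2) (x, y)) = ((x*k2 - y*k1)/(x^2+y^2))%R.
Proof. intros. unfold Complex.Cdiv, Complex.Cmult, Complex.Cinv; simpl. field.
  pose proof (Rle_0_sqr y). unfold Rsqr in *. nra. Qed.

Lemma cmod_ge_fst (v : Complex.C) : (fst v <= Complex.Cmod v)%R.
Proof. pose proof (abs_fst_le_cmod v). pose proof (Rle_abs (fst v)). lra. Qed.

Lemma gdiff_bound (a b : R) (k : Complex.C) (c : R) : (0 < a)%R -> (Complex.Cmod k <= a/2)%R ->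
  (0 <= c <= 1)%R ->
  (Complex.Cmod ((k / ((a,b) + c * k) - k / (a,b))%C) <= 2 / a^2 * Complex.Cmod k ^ 2)%R.
Proof. intros Ha Hk Hc.
  pose proof (abs_fst_le_cmod k) as Hk1.
  assert (Hfa : (a / 2 <= fst (((a,b) + c*k)%C))%R).
  { simpl. assert (Rabs (c * fst k) <= Rabs (fst k))%R.
    { rewrite Rabs_mult. rewrite (Rabs_right c) by lra. pose proof (Rabs_pos (fst k)). nra. }
    pose proof (Rabs_le_between' (c * fst k) 0 (Rabs (fst k))). 
    pose proof (Rle_abs (- (c*fst k))). rewrite Rabs_Ropp in H1. lra. }
  assert (Hm1 : (a/2 <= Complex.Cmod (((a,b) + c*k)%C))%R) by (pose proof (cmod_ge_fst (((a,b) + c*k)%C)); lra).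
  assert (Hm2 : (a <= Complex.Cmod (a,b))%R) by (apply (cmod_ge_fst (a,b))).
  assert (Hn1 : (a,b) + c*k <> 0).
  { intro E. rewrite E in Hm1. rewrite Cmod_0 in Hm1. lra. }
  assert (Hn2 : (a,b) <> C0).
  { intro E. rewrite E in Hm2. rewrite Cmod_0 in Hm2. lra. }
  replace (k / ((a,b) + c * k) - k / (a,b)) with (- (c * k * k) / (((a,b) + c*k) * (a,b))).
  2:{ field. split; auto. }
  rewrite Cmod_div. 2:{ apply Cmult_neq_0; auto. }
  rewrite Cmod_opp, !Cmod_mult, Cmod_R, (Rabs_right c) by lra.
  pose proof (Cmod_ge_0 k).
  apply (Rmult_le_reg_r (Complex.Cmod (((a, b) + c * k)%C) * Complex.Cmod (a, b))). nra.
  unfold Rdiv. rewrite Rmult_assoc, Rinv_l by nra. rewrite Rmult_1_r.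
  assert (HA : (c * Complex.Cmod k * Complex.Cmod k <= Complex.Cmod k ^ 2)%R) by nra.
  assert (HB : (2 / a ^ 2 * Complex.Cmod k ^ 2 * (Complex.Cmod (((a, b) + c * k)%C) * Complex.Cmod (a, b))
    >= 2 / a^2 * Complex.Cmod k ^ 2 * (a/2 * a))%R).
  { apply Rle_ge. apply Rmult_le_compat_l. apply Rmult_le_pos. apply Rmult_le_pos; [lra|].
    apply Rlt_le, Rinv_0_lt_compat. nra. nra. nra. }
  replace (2 / a^2 * Complex.Cmod k ^ 2 * (a/2*a))%R with (Complex.Cmod k ^ 2)%R in HB by (field; lra).
  lra.
Qed.

Lemma cln_est (v k : Complex.C) : (0 < fst v)%R -> (Complex.Cmod k <= fst v / 2)%R ->
  (Complex.Cmod ((Cln (v + k) - Cln v - k / v)%C) <= 4 / (fst v)^2 * Complex.Cmod k ^ 2)%R.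
Proof.
  destruct v as [a b]. simpl fst. intros Ha Hk.
  pose proof (abs_fst_le_cmod k) as Hk1.
  destruct k as [k1 k2]. simpl fst in Hk1.
  assert (Hpos : forall t, (0 <= t <= 1)%R -> (0 < a + t * k1)%R).
  { intros t Ht. assert (Rabs (t * k1) <= Rabs k1)%R.
    { rewrite Rabs_mult. rewrite (Rabs_right t) by lra. pose proof (Rabs_pos k1). nra. }
    pose proof (Rle_abs (- (t*k1))). rewrite Rabs_Ropp in H0. lra. }
  set (F1 := fun t => ln (sqrt ((a + t*k1)^2 + (b+t*k2)^2))).
  set (F2 := fun t => atan ((b+t*k2)/(a + t*k1))).
  set (G1 := fun t => (((a+t*k1)*k1 + (b+t*k2)*k2)/((a+t*k1)^2 + (b+t*k2)^2))%R).
  set (G2 := fun t => (((a+t*k1)*k2 - (b+t*k2)*k1)/((a+t*k1)^2 + (b+t*k2)^2))%R).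
  destruct (MVT_cor2 F1 G1 0 1) as [c1 [E1 Hc1]]. lra.
  { intros c Hc. apply d_F1. apply Hpos. lra. }
  destruct (MVT_cor2 F2 G2 0 1) as [c2 [E2 Hc2]]. lra.
  { intros c Hc. apply d_F2. apply Hpos. lra. }
  assert (HG1 : forall t, (0 <= t <= 1)%R -> G1 t = fst ((k1,k2) / ((a,b) + t * (k1,k2)))).
  { intros t Ht. replace ((a,b) + t*(k1,k2)) with ((a + t*k1, b + t*k2)%R : Complex.C).
    rewrite cdiv_fst by (apply Hpos; auto). unfold G1; reflexivity.
    apply injective_projections; simpl; ring. }
  assert (HG2 : forall t, (0 <= t <= 1)%R -> G2 t = snd ((k1,k2) / ((a,b) + t * (k1,k2)))).
  { intros t Ht. replace ((a,b) + t*(k1,k2)) with ((a + t*k1, b + t*k2)%R : Complex.C).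
    rewrite cdiv_snd by (apply Hpos; auto). unfold G2; reflexivity.
    apply injective_projections; simpl; ring. }
  assert (Hz : (a,b) + 0 * (k1,k2) = (a,b)).
  { apply injective_projections; simpl; ring. }
  assert (HC1 : Cln ((a,b) + (k1,k2)) = (F1 1, F2 1)).
  { unfold Cln, F1, F2, Carg, Defs.Cmod, Re, Im. simpl.
    destruct (Rlt_dec 0 (a + k1)); [|specialize (Hpos 1%R); lra].
    f_equal; f_equal; f_equal; ring. }
  assert (HC0 : Cln (a,b) = (F1 0, F2 0)).
  { unfold Cln, F1, F2, Carg, Defs.Cmod, Re, Im. simpl.
    destruct (Rlt_dec 0 a); [|lra].
    f_equal; f_equal; f_equal; ring. }
  rewrite HC1, HC0.
  set (E := ((F1 1, F2 1) - (F1 0, F2 0) - (k1, k2) / (a, b))%C).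
  assert (Hfm : forall x y : Complex.C, fst (x - y) = (fst x - fst y)%R) by reflexivity.
  assert (Hsm : forall x y : Complex.C, snd (x - y) = (snd x - snd y)%R) by reflexivity.
  assert (HE1 : fst E = fst ((k1,k2) / ((a,b) + c1 * (k1,k2)) - (k1,k2) / (a,b))).
  { unfold E. rewrite !Hfm. cbn [fst]. 
    replace (fst ((k1,k2)/(a,b))) with (G1 0) by (rewrite HG1, Hz; auto; lra).
    rewrite <- (HG1 c1) by lra. rewrite E1. ring. }
  assert (HE2 : snd E = snd ((k1,k2) / ((a,b) + c2 * (k1,k2)) - (k1,k2) / (a,b))).
  { unfold E. rewrite !Hsm. cbn [snd]. 
    replace (snd ((k1,k2)/(a,b))) with (G2 0) by (rewrite HG2, Hz; auto; lra).
    rewrite <- (HG2 c2) by lra. rewrite E2. ring. }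
  pose proof (cmod_le_sum E).
  pose proof (abs_fst_le_cmod ((k1,k2) / ((a,b) + c1 * (k1,k2)) - (k1,k2) / (a,b))).
  pose proof (abs_snd_le_cmod ((k1,k2) / ((a,b) + c2 * (k1,k2)) - (k1,k2) / (a,b))).
  pose proof (gdiff_bound a b (k1,k2) c1 Ha Hk ltac:(lra)).
  pose proof (gdiff_bound a b (k1,k2) c2 Ha Hk ltac:(lra)).
  rewrite HE1, HE2 in *. lra.
Qed.

Local Close Scope C_scope.

Local Open Scope C_scope.

Lemma cpderiv_O2 F z j (d : Complex.C) (d0 K : R) : (0 < d0)%R -> (0 <= K)%R ->
  (forall h : Complex.C, (0 < Complex.Cmod h < d0)%R ->
     (Complex.Cmod (F (shift z j h) - F z - h * d) <= K * Complex.Cmod h ^ 2)%R) ->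
  has_cpderiv F z j d.
Proof. intros Hd0 HK H eps Heps.
  exists (Rmin d0 (eps / (K + 1))). split.
  { apply Rmin_pos; auto. apply Rdiv_lt_0_compat; lra. }
  intros h Hh. change (Defs.Cmod h) with (Complex.Cmod h) in Hh. toC0.
  assert (Hh0 : h <> C0). { intro E. rewrite E, Cmod_0 in Hh. lra. }
  replace ((F (shift z j h) - F z) / h - d) with ((F (shift z j h) - F z - h * d) / h).
  2:{ cfield. auto. }
  rewrite Cmod_div by auto.
  pose proof (Rmin_l d0 (eps / (K + 1))). pose proof (Rmin_r d0 (eps / (K + 1))).
  specialize (H h ltac:(lra)).
  apply (Rle_lt_trans _ (K * Complex.Cmod h)).
  { apply (Rmult_le_reg_r (Complex.Cmod h)). lra. unfold Rdiv. rewrite Rmult_assoc, Rinv_l by lra.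
    rewrite Rmult_1_r. simpl in H. lra. }
  assert (Complex.Cmod h < eps / (K+1))%R by lra.
  assert (K * Complex.Cmod h <= K * (eps / (K+1)))%R by (apply Rmult_le_compat_l; lra).
  assert (K * (eps / (K+1)) < eps)%R.
  { apply (Rmult_lt_reg_r (K+1)). lra. field_simplify; nra. }
  lra.
Qed.

Definition SL p mu (z : nat -> Cx) : Cx :=
  sumC p (fun j => Cln (Csub (RtoC (mu ^ 2)) (Cmul (z j) (z j)))).

Lemma H_tau_eq p Ci w mu tau z :
  H_tau p Ci w mu tau z = Qf p Ci w z - (/ tau)%R * SL p mu z.
Proof. reflexivity. Qed.

Lemma SL_diff p mu z j h : (j < p)%nat ->
  SL p mu (shift z j h) - SL p mu z =
  Cln ((mu^2)%R - (z j + h) * (z j + h)) - Cln ((mu^2)%R - z j * z j).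
Proof. intros Hj. unfold SL. rewrite (sumC_one p j).
  2: auto.
  2:{ intros k Hk Hkj; unfold shift; destruct (Nat.eq_dec k j); [lia|auto]. }
  unfold shift. destruct (Nat.eq_dec j j); [|lia]. reflexivity. Qed.

Definition Dz p (Ci : nat -> nat -> R) (w : nat -> R) (mu tau : R) (z : nat -> Cx) j : Complex.C :=
  sumC p (fun k => Ci j k * (z k - w k)) + sumC p (fun i => (z i - w i) * Ci i j)
  + (/ tau)%R * (2 * z j / ((mu^2)%R - z j * z j)).

Lemma H_identity p Ci w mu tau z j h : (j < p)%nat -> (0 < tau)%R ->
  (mu^2)%R - z j * z j <> C0 ->
  H_tau p Ci w mu tau (shift z j h) - H_tau p Ci w mu tau z - h * Dz p Ci w mu tau z j =
  h * h * Ci j j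
  - (/tau)%R * (Cln (((mu^2)%R - z j * z j) + (- (2 * z j * h + h * h)))
                - Cln ((mu^2)%R - z j * z j)
                - (- (2 * z j * h + h * h)) / ((mu^2)%R - z j * z j))
  + (/tau)%R * (h * h / ((mu^2)%R - z j * z j)).
Proof. intros Hj Ht Hv. rewrite !H_tau_eq.
  replace (Qf p Ci w (shift z j h) - (/ tau)%R * SL p mu (shift z j h) -
     (Qf p Ci w z - (/ tau)%R * SL p mu z))
    with ((Qf p Ci w (shift z j h) - Qf p Ci w z) - (/tau)%R * (SL p mu (shift z j h) - SL p mu z))
    by cring.
  rewrite quad_diff, SL_diff by auto.
  replace ((mu^2)%R - z j * z j + - (2 * z j * h + h * h)) with ((mu^2)%R - (z j + h) * (z j + h)) by cring.
  unfold Dz. cfield. auto.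
Qed.

Lemma H_deriv p Ci w mu tau z j : (j < p)%nat -> (0 < tau)%R ->
  (Rabs (fst (z j)) < mu)%R ->
  has_cpderiv (H_tau p Ci w mu tau) z j (Dz p Ci w mu tau z j).
Proof. intros Hj Ht Hz.
  set (v0 := (mu^2)%R - z j * z j).
  assert (Hv0 : fst v0 = (mu^2 - fst (z j)^2 + snd (z j)^2)%R).
  { unfold v0. destruct (z j) as [x y]. simpl. ring. }
  set (a0 := fst v0).
  assert (Ha0 : (0 < a0)%R).
  { unfold a0. rewrite Hv0. pose proof (Rabs_pos (fst (z j))).
    assert (fst (z j) ^2 < mu^2)%R.
    { rewrite <- (pow2_abs (fst (z j))). simpl. nra. }
    pose proof (pow2_ge_0 (snd (z j))). lra. }
  assert (Hv0n : v0 <> C0). { intro E. unfold a0 in Ha0. rewrite E in Ha0. simpl in Ha0. lra. }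
  assert (Hm0 : (a0 <= Complex.Cmod v0)%R) by apply cmod_ge_fst.
  set (M := (2 * Complex.Cmod (z j) + 1)%R).
  assert (HM : (1 <= M)%R) by (unfold M; pose proof (Cmod_ge_0 (z j)); lra).
  apply (cpderiv_O2 _ _ _ _ (Rmin 1 (a0 / (2*M)))
        (Rabs (Ci j j) + / tau * (4 / a0^2) * M^2 + / tau * / Complex.Cmod v0)).
  { apply Rmin_pos. lra. apply Rdiv_lt_0_compat; lra. }
  { pose proof (Rabs_pos (Ci j j)). assert (0 < / tau)%R by (apply Rinv_0_lt_compat; lra).
    assert (0 < / Complex.Cmod v0)%R by (apply Rinv_0_lt_compat; lra).
    assert (0 < 4 / a0^2)%R by (apply Rdiv_lt_0_compat; nra).
    assert (0 <= / tau * (4/a0^2) * M^2)%R. { apply Rmult_le_pos. nra. nra. }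
    nra. }
  intros h Hh. pose proof (Rmin_l 1 (a0 / (2*M))). pose proof (Rmin_r 1 (a0 / (2*M))).
  rewrite H_identity by auto. fold v0.
  set (k := - (2 * z j * h + h * h)).
  assert (Hk : (Complex.Cmod k <= Complex.Cmod h * M)%R).
  { unfold k. rewrite Cmod_opp. replace (2 * z j * h + h * h) with (h * (2 * z j + h)) by cring.
    rewrite Cmod_mult. apply Rmult_le_compat_l. apply Cmod_ge_0.
    unfold M. eapply Rle_trans. apply Cmod_triangle. rewrite Cmod_mult.
    replace (Complex.Cmod 2) with 2%R. lra.
    rewrite Cmod_R, Rabs_right; lra. }
  assert (Hk2 : (Complex.Cmod k <= a0 / 2)%R).
  { eapply Rle_trans. apply Hk.
    apply (Rmult_le_reg_r (/ M)). apply Rinv_0_lt_compat; lra.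
    rewrite Rmult_assoc, Rinv_r, Rmult_1_r by lra.
    replace (a0 / 2 * / M)%R with (a0 / (2*M))%R by (field; lra). lra. }
  pose proof (cln_est v0 k Ha0 Hk2) as HE. fold a0 in HE.
  eapply Rle_trans. apply Cmod_triangle.
  eapply Rle_trans. apply Rplus_le_compat_r. apply Cmod_triangle.
  rewrite Cmod_opp, !Cmod_mult, !Cmod_R, (Rabs_right (/tau)) by (apply Rle_ge, Rlt_le, Rinv_0_lt_compat; lra).
  rewrite Cmod_div by auto. rewrite Cmod_mult.
  assert (Hit : (0 < / tau)%R) by (apply Rinv_0_lt_compat; lra).
  assert (Hkk : (Complex.Cmod k ^ 2 <= Complex.Cmod h ^ 2 * M^2)%R).
  { pose proof (Cmod_ge_0 k). rewrite <- Rpow_mult_distr. apply pow_incr. lra. }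
  assert (H1 : (/ tau * Complex.Cmod ((Cln (v0 + k) - Cln v0 - k / v0)%C) <= / tau * (4 / a0 ^ 2) * M ^ 2 * Complex.Cmod h ^ 2)%R).
  { rewrite Rmult_assoc, (Rmult_assoc (/tau)). apply Rmult_le_compat_l. lra.
    eapply Rle_trans. apply HE. assert (0 < 4 / a0^2)%R by (apply Rdiv_lt_0_compat; nra). nra. }
  assert (H2 : (/ tau * (Complex.Cmod h * Complex.Cmod h / Complex.Cmod v0) = / tau * / Complex.Cmod v0 * Complex.Cmod h ^ 2)%R).
  { field. lra. }
  pose proof (Cmod_ge_0 h). pose proof (pow2_ge_0 (Complex.Cmod h)).
  simpl pow in *. nra.
Qed.

Local Close Scope C_scope.

Lemma sumR_ext n f g : (forall k, (k < n)%nat -> f k = g k) -> sumR n f = sumR n g.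
Proof. induction n; simpl; intros H; auto. rewrite IHn by (intros; apply H; lia). rewrite H by lia. auto. Qed.
Lemma sumR_plus n f g : sumR n (fun k => f k + g k) = sumR n f + sumR n g.
Proof. induction n; simpl. lra. rewrite IHn. ring. Qed.
Lemma sumR_minus n f g : sumR n (fun k => f k - g k) = sumR n f - sumR n g.
Proof. induction n; simpl. lra. rewrite IHn. ring. Qed.
Lemma sumR_scal n c f : sumR n (fun k => c * f k) = c * sumR n f.
Proof. induction n; simpl. lra. rewrite IHn. ring. Qed.
Lemma sumR_scal_r n c f : sumR n (fun k => f k * c) = sumR n f * c.
Proof. induction n; simpl. lra. rewrite IHn. ring. Qed.
Lemma sumR_zero n : sumR n (fun _ => 0) = 0.
Proof. induction n; simpl. lra. rewrite IHn. ring. Qed.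
Lemma sumR_swap n m f : sumR n (fun i => sumR m (fun k => f i k)) = sumR m (fun k => sumR n (fun i => f i k)).
Proof. induction n; simpl. rewrite sumR_zero. auto. rewrite IHn, <- sumR_plus. auto. Qed.
Lemma sumR_delta n j f : (j < n)%nat -> sumR n (fun k => if Nat.eq_dec k j then f k else 0) = f j.
Proof. induction n; intros H; [lia|]. simpl. destruct (Nat.eq_dec n j).
  - subst. rewrite (sumR_ext _ _ (fun _ => 0)). rewrite sumR_zero. ring.
    intros k Hk. destruct (Nat.eq_dec k j); [lia|auto].
  - rewrite IHn by lia. ring. Qed.
Lemma sumR_delta' n j f : (j < n)%nat -> sumR n (fun k => f k * (if Nat.eq_dec k j then 1 else 0)) = f j.
Proof. intros H. rewrite <- (sumR_delta n j f H). apply sumR_ext. intros k _. destruct (Nat.eq_dec k j); ring. Qed.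
Lemma sumR_delta'' n j f : (j < n)%nat -> sumR n (fun k => (if Nat.eq_dec j k then 1 else 0) * f k) = f j.
Proof. intros H. rewrite <- (sumR_delta n j f H). apply sumR_ext. intros k _. destruct (Nat.eq_dec k j), (Nat.eq_dec j k); try lia; ring. Qed.
Lemma sumR_nonneg n f : (forall k, (k < n)%nat -> 0 <= f k) -> 0 <= sumR n f.
Proof. induction n; simpl; intros H. lra. pose proof (H n ltac:(lia)). pose proof (IHn ltac:(intros; apply H; lia)). lra. Qed.
Lemma sumR_le n f g : (forall k, (k < n)%nat -> f k <= g k) -> sumR n f <= sumR n g.
Proof. induction n; simpl; intros H. lra. pose proof (H n ltac:(lia)). pose proof (IHn ltac:(intros; apply H; lia)). lra. Qed.
Lemma sumR_nonneg_zero n f : (forall k, (k < n)%nat -> 0 <= f k) -> sumR n f = 0 ->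
  forall k, (k < n)%nat -> f k = 0.
Proof. induction n; simpl; intros H E k Hk. lia.
  pose proof (H n ltac:(lia)). pose proof (sumR_nonneg n f ltac:(intros; apply H; lia)).
  destruct (Nat.eq_dec k n). subst. lra. apply IHn; [intros; apply H; lia | lra | lia]. Qed.
Lemma sumR_term_le n f j : (forall k, (k < n)%nat -> 0 <= f k) -> (j < n)%nat -> f j <= sumR n f.
Proof. induction n; simpl; intros H Hj. lia.
  pose proof (H n ltac:(lia)). pose proof (sumR_nonneg n f ltac:(intros; apply H; lia)).
  destruct (Nat.eq_dec j n). subst. lra. pose proof (IHn ltac:(intros; apply H; lia) ltac:(lia)). lra. Qed.

Lemma Ci_sym p C Ci : symmetric p C -> is_inverse p C Ci -> symmetric p Ci.
Proof. intros HC HI i j Hi Hj.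
  set (X := sumR p (fun k => sumR p (fun l => Ci k i * C k l * Ci l j))).
  assert (E1 : X = Ci j i).
  { unfold X. rewrite (sumR_ext _ _ (fun k => Ci k i * (if Nat.eq_dec k j then 1 else 0))).
    - apply (sumR_delta' p j (fun k => Ci k i)); auto.
    - intros k Hk. rewrite <- (proj1 (HI k j Hk Hj)). rewrite <- sumR_scal. apply sumR_ext. intros; ring. }
  assert (E2 : X = Ci i j).
  { unfold X. rewrite sumR_swap.
    rewrite (sumR_ext _ _ (fun l => (if Nat.eq_dec l i then 1 else 0) * Ci l j)).
    - rewrite <- (sumR_delta p i (fun l => Ci l j)) by auto. apply sumR_ext. intros l _.
      destruct (Nat.eq_dec l i); ring.
    - intros l Hl. rewrite <- (proj1 (HI l i Hl Hi)). rewrite <- sumR_scal_r. apply sumR_ext.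
      intros k Hk. rewrite (HC k l) by auto. ring. }
  congruence.
Qed.

Definition qf p (A : nat -> nat -> R) (x : nat -> R) :=
  sumR p (fun i => sumR p (fun k => x i * A i k * x k)).

Lemma qf_ext p A x y : (forall k, (k < p)%nat -> x k = y k) -> qf p A x = qf p A y.
Proof. intros H. unfold qf. apply sumR_ext. intros i Hi. apply sumR_ext. intros k Hk.
  rewrite !H by auto. auto. Qed.

Lemma C_psd p C x : pos_def p C -> 0 <= qf p C x.
Proof. intros [_ HP]. destruct (Classical_Prop.classic (exists j, (j < p)%nat /\ x j <> 0)) as [Hx|Hx].
  - apply Rlt_le. apply HP; auto.
  - rewrite (qf_ext p C x (fun _ => 0)). unfold qf.
    rewrite (sumR_ext _ _ (fun _ => 0)). rewrite sumR_zero; lra.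
    intros i Hi. rewrite (sumR_ext _ _ (fun _ => 0)). apply sumR_zero. intros; ring.
    intros k Hk. destruct (Req_dec (x k) 0); auto. exfalso; apply Hx; eauto.
Qed.

Lemma Ci_psd p C Ci x : pos_def p C -> is_inverse p C Ci -> 0 <= qf p Ci x.
Proof. intros HP HI.
  set (y := fun l => sumR p (fun k => Ci l k * x k)).
  assert (Hx : forall i, (i < p)%nat -> x i = sumR p (fun l => C i l * y l)).
  { intros i Hi. unfold y.
    rewrite (sumR_ext _ _ (fun l => sumR p (fun k => C i l * Ci l k * x k))).
    2:{ intros l Hl. rewrite <- sumR_scal. apply sumR_ext. intros; ring. }
    rewrite sumR_swap.
    rewrite (sumR_ext _ _ (fun k => (if Nat.eq_dec i k then 1 else 0) * x k)).
    - rewrite sumR_delta''; auto.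
    - intros k Hk. rewrite <- (proj1 (HI i k Hi Hk)). rewrite <- sumR_scal_r. apply sumR_ext. intros; ring. }
  assert (E : qf p Ci x = qf p C y).
  { unfold qf.
    rewrite (sumR_ext _ _ (fun i => x i * y i)).
    2:{ intros i Hi. unfold y. rewrite <- sumR_scal. apply sumR_ext. intros; ring. }
    apply sumR_ext. intros i Hi. rewrite Hx by auto. rewrite <- sumR_scal_r. apply sumR_ext. intros; ring. }
  rewrite E. apply C_psd; auto.
Qed.

Definition gfun mu t := t / (mu^2 - t^2).

Lemma gfun_mono mu s t : Rabs s < mu -> Rabs t < mu ->
  (t - s)^2 / mu^2 <= (t - s) * (gfun mu t - gfun mu s).
Proof. intros Hs Ht. unfold gfun.
  assert (Hs2 : s^2 < mu^2) by (rewrite <- (pow2_abs s); pose proof (Rabs_pos s); simpl; nra).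
  assert (Ht2 : t^2 < mu^2) by (rewrite <- (pow2_abs t); pose proof (Rabs_pos t); simpl; nra).
  assert (Hmu : 0 < mu) by (pose proof (Rabs_pos s); lra).
  set (A := mu^2 - t^2). set (B := mu^2 - s^2).
  assert (HA : 0 < A) by (unfold A; lra). assert (HB : 0 < B) by (unfold B; lra).
  assert (Hts : Rabs (t*s) <= mu^2).
  { rewrite Rabs_mult. pose proof (Rabs_pos s); pose proof (Rabs_pos t). simpl. nra. }
  assert (Hkey : A * B <= mu^2 * (mu^2 + t*s)).
  { unfold A, B. pose proof (Rabs_pos (t*s)). pose proof (Rle_abs (t*s)). pose proof (Rle_abs (-(t*s))).
    rewrite Rabs_Ropp in H1.
    assert (t^2 * s^2 <= mu^2 * Rabs (t*s)).
    { assert (E : t^2*s^2 = Rabs (t*s) ^ 2) by (rewrite pow2_abs; ring).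
      rewrite E. simpl. nra. }
    assert (Rabs (t*s) <= t^2 + s^2 + t*s).
    { assert (0 <= (t+s)^2) by apply pow2_ge_0. assert (0 <= (t-s)^2) by apply pow2_ge_0.
      destruct (Rle_dec 0 (t*s)). rewrite Rabs_right by lra. nra. rewrite Rabs_left by lra. nra. }
    assert (mu^2 * Rabs(t*s) <= mu^2*(t^2+s^2+t*s)) by (apply Rmult_le_compat_l; nra).
    replace ((mu ^ 2 - t ^ 2) * (mu ^ 2 - s ^ 2)) with (mu^2*mu^2 - mu^2*(t^2+s^2) + t^2*s^2) by ring.
    lra. }
  replace ((t - s) * (t / A - s / B)) with ((t-s)^2 * ((mu^2 + t*s) / (A*B))).
  2:{ unfold A, B. field. split; lra. }
  apply Rmult_le_compat_l. apply pow2_ge_0.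
  assert (0 < mu^2) by nra.
  apply (Rmult_le_reg_r (A*B * mu^2)). apply Rmult_lt_0_compat; [apply Rmult_lt_0_compat|]; auto.
  replace (/ mu ^ 2 * (A * B * mu ^ 2)) with (A*B) by (field; lra).
  replace ((mu ^ 2 + t * s) / (A * B) * (A * B * mu ^ 2)) with (mu^2 * (mu^2 + t*s)) by (field; lra).
  auto.
Qed.

Definition Ereal p (Ci : nat -> nat -> R) w mu tau (x : nat -> R) j :=
  sumR p (fun k => Ci j k * (x k - w k)) + gfun mu (x j) / tau.

Lemma real_unique p C Ci w mu tau x x' : pos_def p C -> is_inverse p C Ci -> 0 < tau ->
  (forall j, (j < p)%nat -> Rabs (x j) < mu /\ Rabs (x' j) < mu) ->
  (forall j, (j < p)%nat -> Ereal p Ci w mu tau x j = 0) ->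
  (forall j, (j < p)%nat -> Ereal p Ci w mu tau x' j = 0) ->
  forall j, (j < p)%nat -> x j = x' j.
Proof. intros HP HI Ht Hb Hx Hx'.
  set (d := fun k => x k - x' k).
  set (T := fun j => d j * (gfun mu (x j) - gfun mu (x' j)) / tau).
  assert (HT : forall j, (j < p)%nat -> d j ^ 2 / mu^2 / tau <= T j).
  { intros j Hj. unfold T, d. destruct (Hb j Hj). pose proof (gfun_mono mu (x' j) (x j) H0 H).
    unfold Rdiv. apply Rmult_le_compat_r. left; apply Rinv_0_lt_compat; auto. unfold Rdiv in H1. lra. }
  assert (HT0 : forall j, (j < p)%nat -> 0 <= T j).
  { intros j Hj. eapply Rle_trans; [|apply HT; auto].
    destruct (Hb j Hj). assert (0 < mu) by (pose proof (Rabs_pos (x j)); lra).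
    apply Rmult_le_pos. apply Rmult_le_pos. apply pow2_ge_0. left; apply Rinv_0_lt_compat; nra.
    left; apply Rinv_0_lt_compat; auto. }
  assert (HS : qf p Ci d + sumR p T = 0).
  { unfold qf. rewrite <- sumR_plus. rewrite <- (sumR_zero p). apply sumR_ext. intros j Hj.
    assert (E : sumR p (fun k => Ci j k * d k) + (gfun mu (x j) - gfun mu (x' j)) / tau = 0).
    { pose proof (Hx j Hj). pose proof (Hx' j Hj). unfold Ereal in *. unfold d.
      rewrite (sumR_ext _ _ (fun k => Ci j k * (x k - w k) - Ci j k * (x' k - w k))) by (intros; ring).
      rewrite sumR_minus. unfold Rdiv in *. lra. }
    replace (sumR p (fun k => d j * Ci j k * d k)) with (d j * sumR p (fun k => Ci j k * d k)).
    2:{ rewrite <- sumR_scal. apply sumR_ext. intros; ring. }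
    unfold T. replace (d j * (gfun mu (x j) - gfun mu (x' j)) / tau) with
      (d j * ((gfun mu (x j) - gfun mu (x' j)) / tau)) by (unfold Rdiv; ring).
    rewrite <- Rmult_plus_distr_l, E. ring. }
  pose proof (Ci_psd p C Ci d HP HI). pose proof (sumR_nonneg p T HT0).
  assert (sumR p T = 0) by lra.
  intros j Hj. pose proof (sumR_nonneg_zero p T HT0 H1 j Hj). pose proof (HT j Hj).
  destruct (Hb j Hj). assert (0 < mu) by (pose proof (Rabs_pos (x j)); lra).
  assert (d j ^ 2 / mu ^ 2 / tau = 0).
  { apply Rle_antisym. lra. apply Rmult_le_pos. apply Rmult_le_pos. apply pow2_ge_0.
    left; apply Rinv_0_lt_compat; nra. left; apply Rinv_0_lt_compat; auto. }
  unfold Rdiv in H7. apply Rmult_integral in H7. destruct H7.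
  apply Rmult_integral in H7. destruct H7. unfold d in H7. simpl in H7. nra.
  pose proof (Rinv_neq_0_compat (mu^2)). exfalso. apply H8; auto. nra.
  pose proof (Rinv_neq_0_compat tau). exfalso. apply H8; auto. lra.
Qed.

Lemma snd_S1 p (Ci : nat -> nat -> R) (w : nat -> R) (z : nat -> Cx) j :
  snd (sumC p (fun k => (Ci j k * (z k - w k))%C)) = sumR p (fun k => Ci j k * snd (z k)).
Proof. rewrite snd_sumC. apply sumR_ext. intros k _. destruct (z k). simpl. ring. Qed.
Lemma snd_S2 p (Ci : nat -> nat -> R) (w : nat -> R) (z : nat -> Cx) j :
  symmetric p Ci -> (j < p)%nat ->
  snd (sumC p (fun i => ((z i - w i) * Ci i j)%C)) = sumR p (fun k => Ci j k * snd (z k)).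
Proof. intros HS Hj. rewrite snd_sumC. apply sumR_ext. intros k Hk. rewrite (HS k j) by auto.
  destruct (z k). simpl. ring. Qed.
Lemma fst_S1 p (Ci : nat -> nat -> R) (w : nat -> R) (z : nat -> Cx) j :
  fst (sumC p (fun k => (Ci j k * (z k - w k))%C)) = sumR p (fun k => Ci j k * (fst (z k) - w k)).
Proof. rewrite fst_sumC. apply sumR_ext. intros k _. destruct (z k). simpl. ring. Qed.
Lemma fst_S2 p (Ci : nat -> nat -> R) (w : nat -> R) (z : nat -> Cx) j :
  symmetric p Ci -> (j < p)%nat ->
  fst (sumC p (fun i => ((z i - w i) * Ci i j)%C)) = sumR p (fun k => Ci j k * (fst (z k) - w k)).
Proof. intros HS Hj. rewrite fst_sumC. apply sumR_ext. intros k Hk. rewrite (HS k j) by auto.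
  destruct (z k). simpl. ring. Qed.

Lemma last_snd (mu tau x y : R) : 0 < tau -> mu^2 - x^2 + y^2 > 0 ->
  snd ((/ tau)%R * (2 * (x,y) / ((mu^2)%R - (x,y) * (x,y))))%C =
  / tau * (2 * y * (mu^2 + x^2 + y^2) / ((mu^2 - x^2 + y^2)^2 + (2*x*y)^2)).
Proof. intros Ht H. unfold Complex.Cdiv, Complex.Cmult, Complex.Cinv, Complex.Cminus, Complex.Cplus, Complex.Copp. simpl.
  field. split; [|lra]. simpl in H. nra. Qed.
Lemma last_fst (mu tau x : R) : 0 < tau -> mu^2 - x^2 > 0 ->
  fst ((/ tau)%R * (2 * (x,0%R) / ((mu^2)%R - (x,0%R) * (x,0%R))))%C =
  / tau * (2 * x / (mu^2 - x^2)).
Proof. intros Ht H. unfold Complex.Cdiv, Complex.Cmult, Complex.Cinv, Complex.Cminus, Complex.Cplus, Complex.Copp. simpl.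
  field. split; [|lra]. simpl in H. lra. Qed.

Lemma Dz_split p Ci w mu tau z j :
  Dz p Ci w mu tau z j = Complex.Cplus (Complex.Cplus (sumC p (fun k => (Ci j k * (z k - w k))%C))
    (sumC p (fun i => ((z i - w i) * Ci i j)%C)))
    ((/ tau)%R * (2 * z j / ((mu^2)%R - z j * z j)))%C.
Proof. reflexivity. Qed.

Lemma crit_real p C Ci w mu tau z : pos_def p C -> is_inverse p C Ci -> 0 < tau ->
  inD p mu z -> (forall j, (j < p)%nat -> Dz p Ci w mu tau z j = Complex.RtoC 0) ->
  (forall j, (j < p)%nat -> snd (z j) = 0) /\
  (forall j, (j < p)%nat -> Ereal p Ci w mu tau (fun k => fst (z k)) j = 0).
Proof. intros HP HI Ht HD HZ.
  assert (HS : symmetric p Ci) by (apply (Ci_sym p C); auto; apply HP).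
  assert (Ha : forall j, (j < p)%nat -> mu^2 - fst (z j)^2 > 0).
  { intros j Hj. specialize (HD j Hj). unfold Re in HD. rewrite <- (pow2_abs (fst (z j))).
    pose proof (Rabs_pos (fst (z j))). simpl. nra. }
  set (y := fun k => snd (z k)).
  set (T := fun j => y j * (/ tau * (2 * y j * (mu^2 + fst (z j)^2 + y j^2) /
        ((mu^2 - fst (z j)^2 + y j^2)^2 + (2*fst (z j)*y j)^2)))).
  assert (HE : forall j, (j < p)%nat -> 2 * sumR p (fun k => Ci j k * y k) +
      / tau * (2 * y j * (mu^2 + fst (z j)^2 + y j^2) /
        ((mu^2 - fst (z j)^2 + y j^2)^2 + (2*fst (z j)*y j)^2)) = 0).
  { intros j Hj. pose proof (f_equal snd (HZ j Hj)) as E. rewrite Dz_split in E.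
    change (snd (Complex.Cplus (Complex.Cplus ?A ?B) ?D)) with (snd A + snd B + snd D) in E.
    rewrite snd_S1, snd_S2 in E by auto. destruct (z j) as [xj yj] eqn:Ezj.
    rewrite last_snd in E. unfold y. rewrite Ezj. simpl in E |- *. lra. auto.
    specialize (Ha j Hj). rewrite Ezj in Ha. simpl in Ha |- *. pose proof (pow2_ge_0 yj). simpl in *. lra. }
  assert (HN : forall j, (j < p)%nat -> 0 < (mu^2 - fst (z j)^2 + y j^2)^2 + (2*fst (z j)*y j)^2).
  { intros j Hj. specialize (Ha j Hj). pose proof (pow2_ge_0 (y j)). pose proof (pow2_ge_0 (2*fst (z j)*y j)).
    assert (0 < (mu^2 - fst (z j)^2 + y j^2)) by lra. simpl in *. nra. }
  assert (HT0 : forall j, (j < p)%nat -> 0 <= T j).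
  { intros j Hj. unfold T. specialize (HN j Hj).
    assert (0 <= mu^2 + fst (z j)^2 + y j^2).
    { pose proof (pow2_ge_0 (y j)). pose proof (pow2_ge_0 (fst (z j))). pose proof (pow2_ge_0 mu). lra. }
    replace (y j * (/ tau * (2 * y j * (mu ^ 2 + fst (z j) ^ 2 + y j ^ 2) /
       ((mu ^ 2 - fst (z j) ^ 2 + y j ^ 2) ^ 2 + (2 * fst (z j) * y j) ^ 2))))
      with (2 * (y j * y j) * (mu ^ 2 + fst (z j) ^ 2 + y j ^ 2) * (/ tau * /
       ((mu ^ 2 - fst (z j) ^ 2 + y j ^ 2) ^ 2 + (2 * fst (z j) * y j) ^ 2))) by (unfold Rdiv; ring).
    apply Rmult_le_pos. apply Rmult_le_pos. pose proof (Rle_0_sqr (y j)). unfold Rsqr in *. lra. auto.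
    apply Rmult_le_pos; left; apply Rinv_0_lt_compat; auto. }
  assert (HS0 : 2 * qf p Ci y + sumR p T = 0).
  { unfold qf. rewrite <- sumR_scal, <- sumR_plus, <- (sumR_zero p). apply sumR_ext. intros j Hj.
    replace (sumR p (fun k => y j * Ci j k * y k)) with (y j * sumR p (fun k => Ci j k * y k)).
    2:{ rewrite <- sumR_scal. apply sumR_ext. intros; ring. }
    unfold T. specialize (HE j Hj). 
    replace 0 with (y j * 0) by ring. rewrite <- HE. ring. }
  pose proof (Ci_psd p C Ci y HP HI). pose proof (sumR_nonneg p T HT0).
  assert (HT : sumR p T = 0) by lra.
  assert (Hy : forall j, (j < p)%nat -> snd (z j) = 0).
  { intros j Hj. pose proof (sumR_nonneg_zero p T HT0 HT j Hj) as E. unfold T in E.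
    specialize (HN j Hj). specialize (Ha j Hj).
    assert (0 < mu^2 + fst (z j)^2 + y j^2).
    { pose proof (pow2_ge_0 (y j)). pose proof (pow2_ge_0 (fst (z j))). lra. }
    replace (y j * (/ tau * (2 * y j * (mu ^ 2 + fst (z j) ^ 2 + y j ^ 2) /
       ((mu ^ 2 - fst (z j) ^ 2 + y j ^ 2) ^ 2 + (2 * fst (z j) * y j) ^ 2))))
      with ((y j * y j) * (2 * (mu ^ 2 + fst (z j) ^ 2 + y j ^ 2) * / tau * /
       ((mu ^ 2 - fst (z j) ^ 2 + y j ^ 2) ^ 2 + (2 * fst (z j) * y j) ^ 2))) in E by (unfold Rdiv; ring).
    apply Rmult_integral in E. destruct E as [E|E].
    - apply Rmult_integral in E. unfold y in E. destruct E; auto.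
    - exfalso. assert (0 < / tau) by (apply Rinv_0_lt_compat; auto).
      assert (0 < / ((mu ^ 2 - fst (z j) ^ 2 + y j ^ 2) ^ 2 + (2 * fst (z j) * y j) ^ 2)) by (apply Rinv_0_lt_compat; auto).
      assert (0 < 2 * (mu ^ 2 + fst (z j) ^ 2 + y j ^ 2) * / tau) by (apply Rmult_lt_0_compat; lra).
      nra. }
  split; auto.
  intros j Hj. pose proof (f_equal fst (HZ j Hj)) as E. rewrite Dz_split in E.
  change (fst (Complex.Cplus (Complex.Cplus ?A ?B) ?D)) with (fst A + fst B + fst D) in E.
  rewrite fst_S1, fst_S2 in E by auto. 
  replace (z j) with ((fst (z j), 0%R) : Complex.C) in E.
  2:{ rewrite <- (Hy j Hj). destruct (z j); auto. }
  rewrite last_fst in E by auto. unfold Ereal, gfun. cbn [fst snd Complex.RtoC] in E. 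
  unfold Rdiv in *.
  match goal with |- ?L = 0 => assert (E2 : 2 * L = 0) by (rewrite <- E; ring) end. lra.
Qed.

Definition psi mu tau lam t := lam * t + gfun mu t / tau.

Lemma tm_pos tau mu : 0 < tau -> 0 < mu -> 0 < / (tau * mu^2).
Proof. intros. apply Rinv_0_lt_compat. apply Rmult_lt_0_compat; auto. apply pow_lt; auto. Qed.

Lemma psi_mono mu tau lam s t : 0 < tau -> 0 < mu -> Rabs s < mu -> Rabs t < mu -> s <= t ->
  (lam + / (tau * mu^2)) * (t - s) <= psi mu tau lam t - psi mu tau lam s.
Proof. intros Ht Hm Hs Htt Hst. unfold psi.
  destruct (Req_dec s t). subst. lra.
  pose proof (gfun_mono mu s t Hs Htt).
  assert (gfun mu t - gfun mu s >= (t - s) / mu^2).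
  { apply Rle_ge. apply (Rmult_le_reg_l (t - s)). lra.
    replace ((t - s) * ((t - s) / mu ^ 2)) with ((t-s)^2/mu^2) by (unfold Rdiv; ring). auto. }
  replace (lam * t + gfun mu t / tau - (lam * s + gfun mu s / tau)) with
     (lam * (t - s) + (gfun mu t - gfun mu s) / tau) by (unfold Rdiv; ring).
  replace ((lam + / (tau * mu^2)) * (t - s)) with (lam * (t - s) + ((t - s) / mu^2) / tau)
    by (field; split; lra).
  apply Rplus_le_compat_l. unfold Rdiv. apply Rmult_le_compat_r. left; apply Rinv_0_lt_compat; auto.
  unfold Rdiv in H1. lra.
Qed.

Lemma psi_odd mu tau lam t : psi mu tau lam (- t) = - psi mu tau lam t.
Proof. unfold psi, gfun. replace ((- t)^2) with (t^2) by ring. unfold Rdiv. ring. Qed.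

Lemma psi_big mu tau lam c : 0 < tau -> 0 < mu -> 0 <= lam ->
  exists b, 0 <= b < mu /\ c < psi mu tau lam b.
Proof. intros Ht Hm Hl.
  set (d := Rmin (mu/2) (/ (4 * tau * (Rabs c + 1)))).
  assert (Hc : 0 < Rabs c + 1) by (pose proof (Rabs_pos c); lra).
  assert (Hd0 : 0 < d). { apply Rmin_pos. lra. apply Rinv_0_lt_compat. nra. }
  assert (Hd1 : d <= mu/2) by apply Rmin_l.
  assert (Hd2 : d <= / (4 * tau * (Rabs c + 1))) by apply Rmin_r.
  exists (mu - d). split. lra.
  unfold psi, gfun.
  assert (E : mu^2 - (mu - d)^2 = d * (2*mu - d)) by ring. rewrite E.
  assert (H1 : / (4 * d) <= (mu - d) / (d * (2 * mu - d))).
  { assert (0 < 2*mu - d) by lra.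
    apply (Rmult_le_reg_r (4 * d * (d * (2*mu - d)))).
    { apply Rmult_lt_0_compat. lra. apply Rmult_lt_0_compat; lra. }
    replace (/ (4 * d) * (4 * d * (d * (2 * mu - d)))) with (d * (2*mu - d)) by (field; lra).
    replace ((mu - d) / (d * (2 * mu - d)) * (4 * d * (d * (2 * mu - d)))) with (4 * d * (mu - d)) by (field; lra).
    nra. }
  assert (H2 : Rabs c + 1 <= / (4 * d) / tau).
  { apply (Rmult_le_reg_r (4 * d * tau)). nra.
    replace (/ (4 * d) / tau * (4 * d * tau)) with 1 by (field; lra).
    apply (Rmult_le_compat_r (4 * tau * (Rabs c + 1))) in Hd2; [|nra].
    rewrite Rinv_l in Hd2 by nra. nra. }
  assert (H3 : / (4 * d) / tau <= (mu - d) / (d * (2 * mu - d)) / tau).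
  { unfold Rdiv. apply Rmult_le_compat_r. left; apply Rinv_0_lt_compat; auto. unfold Rdiv in H1. lra. }
  pose proof (Rle_abs c). assert (0 <= lam * (mu - d)) by (apply Rmult_le_pos; lra).
  lra.
Qed.

Lemma psi_cont mu tau lam t : 0 < tau -> Rabs t < mu -> continuity_pt (psi mu tau lam) t.
Proof. intros Ht Hb. apply derivable_continuous_pt.
  assert (mu^2 - t^2 > 0) by (rewrite <- (pow2_abs t); pose proof (Rabs_pos t); simpl; nra).
  exists (lam + (/ tau) * ((mu^2 + t^2) / (mu^2 - t^2)^2)).
  apply is_derive_Reals. unfold psi, gfun. auto_derive.
  - simpl in H. lra.
  - field. simpl in H. split; lra.
Qed.

Lemma psi_inv_ex mu tau lam c : 0 < tau -> 0 < mu -> 0 <= lam ->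
  exists t, Rabs t < mu /\ psi mu tau lam t = c.
Proof. intros Ht Hm Hl.
  destruct (psi_big mu tau lam c Ht Hm Hl) as [b1 [Hb1 E1]].
  destruct (psi_big mu tau lam (- c) Ht Hm Hl) as [b2 [Hb2 E2]].
  set (b := Rmax b1 b2).
  assert (Hb : 0 <= b < mu) by (unfold b; apply Rmax_case; lra).
  assert (P1 : c < psi mu tau lam b).
  { pose proof (psi_mono mu tau lam b1 b Ht Hm ltac:(rewrite Rabs_right; lra) ltac:(rewrite Rabs_right; lra) ltac:(unfold b; apply Rmax_l)).
    assert (0 <= (lam + / (tau * mu ^ 2)) * (b - b1)).
    { apply Rmult_le_pos. pose proof (tm_pos tau mu Ht Hm). lra.
      unfold b; pose proof (Rmax_l b1 b2); lra. }
    lra. }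
  assert (P2 : psi mu tau lam (- b) < c).
  { rewrite psi_odd. pose proof (psi_mono mu tau lam b2 b Ht Hm ltac:(rewrite Rabs_right; lra) ltac:(rewrite Rabs_right; lra) ltac:(unfold b; apply Rmax_r)).
    assert (0 <= (lam + / (tau * mu ^ 2)) * (b - b2)).
    { apply Rmult_le_pos. pose proof (tm_pos tau mu Ht Hm). lra.
      unfold b; pose proof (Rmax_r b1 b2); lra. }
    lra. }
  destruct (Req_dec b 0).
  { exfalso. rewrite H in P1, P2. replace (-0) with 0 in P2 by ring. lra. }
  destruct (Ranalysis5.IVT_interv (fun t => psi mu tau lam t - c) (- b) b) as [t [Htb Ht0]].
  - intros a Ha. apply continuity_pt_minus. apply psi_cont; auto.
    apply Rabs_def1; lra. apply continuity_pt_const. intros u v; auto.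
  - lra.
  - lra.
  - lra.
  - exists t. split. apply Rabs_def1; lra. lra.
Qed.

Definition psinv mu tau lam (H : 0 < tau /\ 0 < mu /\ 0 <= lam) (c : R) : R :=
  proj1_sig (constructive_indefinite_description _
    (psi_inv_ex mu tau lam c (proj1 H) (proj1 (proj2 H)) (proj2 (proj2 H)))).

Lemma psinv_spec mu tau lam H c : Rabs (psinv mu tau lam H c) < mu /\ psi mu tau lam (psinv mu tau lam H c) = c.
Proof. unfold psinv. destruct (constructive_indefinite_description _ _). simpl. auto. Qed.

Lemma psinv_lip mu tau lam H a b :
  Rabs (psinv mu tau lam H a - psinv mu tau lam H b) * (lam + / (tau * mu^2)) <= Rabs (a - b).
Proof. destruct H as [Ht [Hm Hl]] eqn:EH.
  destruct (psinv_spec mu tau lam H a) as [Ha Ea]. destruct (psinv_spec mu tau lam H b) as [Hb Eb].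
  rewrite <- EH in *.
  set (s := psinv mu tau lam H a) in *. set (t := psinv mu tau lam H b) in *.
  pose proof (tm_pos tau mu Ht Hm).
  destruct (Rle_dec t s).
  - pose proof (psi_mono mu tau lam t s Ht Hm Hb Ha r).
    rewrite Ea, Eb in H1. assert (0 <= (lam + / (tau * mu^2)) * (s - t)) by (apply Rmult_le_pos; lra).
    rewrite !Rabs_right by lra. nra.
  - pose proof (psi_mono mu tau lam s t Ht Hm Ha Hb ltac:(lra)).
    rewrite Ea, Eb in H1. assert (0 <= (lam + / (tau * mu^2)) * (t - s)) by (apply Rmult_le_pos; lra).
    rewrite !Rabs_left1 by lra. nra.
Qed.

Definition Nrm p (d : nat -> R) := sumR p (fun j => d j ^ 2).

Lemma sumR_abs n f : Rabs (sumR n f) <= sumR n (fun k => Rabs (f k)).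
Proof. induction n; simpl. rewrite Rabs_R0; lra. eapply Rle_trans. apply Rabs_triang. lra. Qed.

Lemma Nrm_nonneg p d : 0 <= Nrm p d.
Proof. apply sumR_nonneg. intros; apply pow2_ge_0. Qed.

Lemma comp_le_Nrm p d k : (k < p)%nat -> Rabs (d k) <= sqrt (Nrm p d).
Proof. intros Hk. rewrite <- (sqrt_pow2 (Rabs (d k))) by apply Rabs_pos. apply sqrt_le_1_alt.
  rewrite pow2_abs. apply (sumR_term_le p (fun j => d j ^ 2)); auto. intros; apply pow2_ge_0. Qed.

Lemma Ad_bound p (A : nat -> nat -> R) d j :
  (sumR p (fun k => A j k * d k))^2 <= (sumR p (fun k => Rabs (A j k)))^2 * Nrm p d.
Proof. set (s := sqrt (Nrm p d)).
  assert (Hs : s^2 = Nrm p d) by (unfold s; rewrite pow2_sqrt; auto; apply Nrm_nonneg).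
  assert (H : Rabs (sumR p (fun k => A j k * d k)) <= sumR p (fun k => Rabs (A j k)) * s).
  { eapply Rle_trans. apply sumR_abs. rewrite <- sumR_scal_r. apply sumR_le. intros k Hk.
    rewrite Rabs_mult. apply Rmult_le_compat_l. apply Rabs_pos. apply comp_le_Nrm; auto. }
  rewrite <- Hs. rewrite <- Rpow_mult_distr. rewrite <- pow2_abs.
  pose proof (Rabs_pos (sumR p (fun k => A j k * d k))). apply pow_incr. lra.
Qed.

Definition K2 p (A : nat -> nat -> R) := sumR p (fun j => (sumR p (fun k => Rabs (A j k)))^2).

Definition Tmap p (Ci : nat -> nat -> R) w mu tau lam H (u : nat -> R) : nat -> R :=
  fun j => psinv mu tau lam H (lam * u j - sumR p (fun k => Ci j k * (u k - w k))).

Lemma Tcontr p C Ci w mu tau lam H u v : pos_def p C -> is_inverse p C Ci ->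
  (lam + / (tau * mu^2))^2 * Nrm p (fun j => Tmap p Ci w mu tau lam H u j - Tmap p Ci w mu tau lam H v j)
  <= (lam^2 + K2 p Ci) * Nrm p (fun j => u j - v j).
Proof. intros HP HI. pose proof H as [Ht [Hm Hl]].
  set (m := / (tau * mu^2)). assert (Hm0 : 0 < m) by (apply tm_pos; auto).
  set (d := fun j => u j - v j).
  set (Ad := fun j => sumR p (fun k => Ci j k * d k)).
  set (e := fun j => lam * d j - Ad j).
  assert (H1 : forall j, (lam + m)^2 * (Tmap p Ci w mu tau lam H u j - Tmap p Ci w mu tau lam H v j)^2 <= e j ^ 2).
  { intros j. unfold Tmap. pose proof (psinv_lip mu tau lam H
      (lam * u j - sumR p (fun k => Ci j k * (u k - w k)))
      (lam * v j - sumR p (fun k => Ci j k * (v k - w k)))) as L.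
    replace (lam * u j - sumR p (fun k => Ci j k * (u k - w k)) -
        (lam * v j - sumR p (fun k => Ci j k * (v k - w k)))) with (e j) in L.
    2:{ unfold e, Ad, d.
        rewrite (sumR_ext p (fun k => Ci j k * (u k - v k)) (fun k => Ci j k * (u k - w k) - Ci j k * (v k - w k))) by (intros; ring).
        rewrite sumR_minus. ring. }
    fold m in L. rewrite <- (pow2_abs (e j)). rewrite <- (pow2_abs (_ - _)).
    rewrite <- Rpow_mult_distr. rewrite Rmult_comm. apply pow_incr. split; auto.
    apply Rmult_le_pos. apply Rabs_pos. lra. }
  assert (H2 : sumR p (fun j => e j ^ 2) = lam^2 * Nrm p d - 2 * lam * qf p Ci d + sumR p (fun j => Ad j ^ 2)).
  { unfold Nrm, qf. rewrite <- sumR_scal, <- (sumR_scal p (2*lam)), <- sumR_minus, <- sumR_plus.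
    apply sumR_ext. intros j Hj. unfold e.
    replace (sumR p (fun k => d j * Ci j k * d k)) with (d j * Ad j).
    ring. unfold Ad. rewrite <- sumR_scal. apply sumR_ext; intros; ring. }
  assert (H3 : sumR p (fun j => Ad j ^ 2) <= K2 p Ci * Nrm p d).
  { unfold K2. rewrite <- sumR_scal_r. apply sumR_le. intros j Hj. apply Ad_bound. }
  pose proof (Ci_psd p C Ci d HP HI).
  assert (H4 : 0 <= 2 * lam * qf p Ci d) by (apply Rmult_le_pos; lra).
  unfold Nrm at 1. rewrite <- sumR_scal.
  eapply Rle_trans. apply sumR_le. intros j _. apply H1.
  fold d. rewrite H2. lra.
Qed.

Fixpoint useq (T : (nat -> R) -> (nat -> R)) (u0 : nat -> R) (n : nat) : nat -> R :=
  match n with O => u0 | S n => T (useq T u0 n) end.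

Lemma sqrt_pow_n q n : 0 <= q -> sqrt (q ^ n) = sqrt q ^ n.
Proof. intros Hq. induction n; simpl. apply sqrt_1. rewrite sqrt_mult_alt by auto. rewrite IHn. auto. Qed.

Lemma sumR_const n c : sumR n (fun _ => c) = INR n * c.
Proof. induction n. simpl. ring. rewrite S_INR. simpl. rewrite IHn. ring. Qed.

Lemma fixed_point p (T : (nat -> R) -> (nat -> R)) q : 0 <= q < 1 ->
  (forall u v, Nrm p (fun j => T u j - T v j) <= q * Nrm p (fun j => u j - v j)) ->
  exists L : nat -> R, forall j, (j < p)%nat -> T L j = L j.
Proof. intros Hq HT.
  set (u := useq T (fun _ => 0)).
  set (D0 := Nrm p (fun j => u 1%nat j - u 0%nat j)).
  assert (HD0 : 0 <= D0) by apply Nrm_nonneg.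
  assert (Hn : forall n, Nrm p (fun j => u (S n) j - u n j) <= q ^ n * D0).
  { induction n. simpl pow. rewrite Rmult_1_l. apply Rle_refl. simpl pow.
    eapply Rle_trans. apply (HT (u (S n)) (u n)). rewrite Rmult_assoc. apply Rmult_le_compat_l; lra. }
  set (r := sqrt q). set (B := sqrt D0).
  assert (Hr : 0 <= r < 1).
  { split. apply sqrt_pos. unfold r. rewrite <- sqrt_1. apply sqrt_lt_1_alt. lra. }
  assert (HB : 0 <= B) by apply sqrt_pos.
  assert (Hstep : forall n j, (j < p)%nat -> Rabs (u (S n) j - u n j) <= B * r ^ n).
  { intros n j Hj. eapply Rle_trans. apply (comp_le_Nrm p (fun j => u (S n) j - u n j)); auto.
    eapply Rle_trans. apply sqrt_le_1_alt. apply Hn.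
    rewrite sqrt_mult_alt by (apply pow_le; lra). rewrite sqrt_pow_n by lra. fold r B. lra. }
  assert (Hcau : forall n k j, (j < p)%nat -> Rabs (u (n + k)%nat j - u n j) <= B * r ^ n * (1 - r ^ k) / (1 - r)).
  { intros n k j Hj. induction k.
    - rewrite Nat.add_0_r. replace (u n j - u n j) with 0 by ring. rewrite Rabs_R0. simpl.
      replace (B * r ^ n * (1 - 1) / (1 - r)) with 0 by (field; lra). lra.
    - replace (n + S k)%nat with (S (n + k)) by lia.
      replace (u (S (n + k)) j - u n j) with ((u (S (n + k)) j - u (n + k)%nat j) + (u (n + k)%nat j - u n j)) by ring.
      eapply Rle_trans. apply Rabs_triang. pose proof (Hstep (n + k)%nat j Hj).
      rewrite pow_add in H. 
      replace (B * r ^ n * (1 - r ^ S k) / (1 - r)) with (B * (r ^ n * r ^ k) + B * r ^ n * (1 - r ^ k) / (1 - r))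
        by (simpl; field; lra). lra. }
  set (c := fun n => B * r ^ n / (1 - r)).
  assert (Hc : forall n m j, (j < p)%nat -> (n <= m)%nat -> Rabs (u m j - u n j) <= c n).
  { intros n m j Hj Hnm. replace m with (n + (m - n))%nat by lia.
    eapply Rle_trans. apply Hcau; auto. unfold c.
    unfold Rdiv. apply Rmult_le_compat_r. left; apply Rinv_0_lt_compat; lra.
    assert (0 <= r ^ (m - n)) by (apply pow_le; lra).
    assert (0 <= B * r ^ n) by (apply Rmult_le_pos; auto; apply pow_le; lra). nra. }
  assert (Hsmall : forall y, 0 < y -> exists N, forall n, (n >= N)%nat -> c n < y).
  { intros y Hy. destruct (pow_lt_1_zero r ltac:(rewrite Rabs_right; lra) (y * (1 - r) / (B + 1)))
      as [N HN]. { apply Rdiv_lt_0_compat. nra. lra. }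
    exists N. intros n Hnn. specialize (HN n Hnn). rewrite Rabs_right in HN by (apply Rle_ge, pow_le; lra).
    unfold c. apply (Rmult_lt_reg_r (1 - r)). lra. unfold Rdiv. rewrite Rmult_assoc, Rinv_l, Rmult_1_r by lra.
    apply (Rmult_lt_compat_r (B + 1)) in HN; [|lra].
    replace (y * (1 - r) / (B + 1) * (B + 1)) with (y * (1 - r)) in HN by (field; lra).
    assert (0 <= r ^ n) by (apply pow_le; lra). nra. }
  assert (HCC : forall j, (j < p)%nat -> Cauchy_crit (fun n => u n j)).
  { intros j Hj eps Heps. destruct (Hsmall eps Heps) as [N HN]. exists N. intros n m Hn1 Hm1.
    unfold R_dist. destruct (Nat.le_ge_cases n m).
    - rewrite Rabs_minus_sym. eapply Rle_lt_trans. apply Hc; auto. apply HN; lia.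
    - eapply Rle_lt_trans. apply Hc; auto. apply HN; lia. }
  set (L := fun j => match Compare_dec.lt_dec j p with left Hj => proj1_sig (R_complete _ (HCC j Hj)) | right _ => 0 end).
  assert (HL : forall j, (j < p)%nat -> Un_cv (fun n => u n j) (L j)).
  { intros j Hj. unfold L. destruct (Compare_dec.lt_dec j p); [|lia]. destruct (R_complete _ _). simpl. auto. }
  assert (HLb : forall n j, (j < p)%nat -> Rabs (L j - u n j) <= c n).
  { intros n j Hj. destruct (Rle_dec (Rabs (L j - u n j)) (c n)) as [?|Hne]; auto. exfalso.
    destruct (HL j Hj (Rabs (L j - u n j) - c n)) as [N HN]. lra.
    specialize (HN (max N n) ltac:(lia)). unfold R_dist in HN.
    pose proof (Hc n (max N n) j Hj ltac:(lia)).
    pose proof (Rabs_triang (L j - u (max N n) j) (u (max N n) j - u n j)).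
    replace (L j - u (max N n) j + (u (max N n) j - u n j)) with (L j - u n j) in H0 by ring.
    rewrite Rabs_minus_sym in HN. lra. }
  exists L. intros j Hj.
  assert (HNL : forall n, Nrm p (fun k => L k - u n k) <= INR p * c n ^ 2).
  { intros n. unfold Nrm. rewrite <- sumR_const.
    apply sumR_le. intros k Hk. rewrite <- pow2_abs. apply pow_incr. split. apply Rabs_pos. auto. }
  assert (Hcn : forall n, 0 <= c n).
  { intros n. unfold c. apply Rmult_le_pos. apply Rmult_le_pos; auto. apply pow_le; lra.
    left. apply Rinv_0_lt_compat. lra. }
  assert (HTb : forall n, Rabs (T L j - L j) <= (INR p + 2) * c n).
  { intros n. 
    assert (A1 : Rabs (T L j - T (u n) j) <= (INR p + 1) * c n).
    { assert (Nrm p (fun k => T L k - T (u n) k) <= INR p * c n ^ 2).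
      { eapply Rle_trans. apply HT. eapply Rle_trans. apply Rmult_le_compat_r. apply Nrm_nonneg.
        instantiate (1 := 1). lra. rewrite Rmult_1_l. apply HNL. }
      eapply Rle_trans. apply (comp_le_Nrm p (fun k => T L k - T (u n) k)); auto.
      rewrite <- (sqrt_pow2 ((INR p + 1) * c n)). apply sqrt_le_1_alt. eapply Rle_trans. apply H.
      pose proof (pos_INR p). specialize (Hcn n). rewrite Rpow_mult_distr. apply Rmult_le_compat_r.
      apply pow2_ge_0. nra. pose proof (pos_INR p). specialize (Hcn n). nra. }
    assert (A2 : Rabs (u (S n) j - L j) <= c n).
    { rewrite Rabs_minus_sym. eapply Rle_trans. apply HLb; auto. unfold c. simpl pow.
      unfold Rdiv. apply Rmult_le_compat_r. left; apply Rinv_0_lt_compat; lra.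
      assert (0 <= B * r ^ n) by (apply Rmult_le_pos; auto; apply pow_le; lra). nra. }
    change (u (S n)) with (T (u n)) in A2.
    pose proof (Rabs_triang (T L j - T (u n) j) (T (u n) j - L j)).
    replace (T L j - T (u n) j + (T (u n) j - L j)) with (T L j - L j) in H by ring. lra. }
  destruct (Req_dec (T L j - L j) 0) as [E|E]. lra. exfalso.
  assert (Hpos : 0 < Rabs (T L j - L j)) by (apply Rabs_pos_lt; auto).
  pose proof (pos_INR p).
  destruct (Hsmall (Rabs (T L j - L j) / (INR p + 2))) as [N HN]. apply Rdiv_lt_0_compat; lra.
  specialize (HN N (Nat.le_refl N)). specialize (HTb N).
  apply (Rmult_lt_compat_r (INR p + 2)) in HN; [|lra].
  replace (Rabs (T L j - L j) / (INR p + 2) * (INR p + 2)) with (Rabs (T L j - L j)) in HN by (field; lra).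
  lra.
Qed.

Lemma real_exists p C Ci w mu tau : pos_def p C -> is_inverse p C Ci -> 0 < mu -> 0 < tau ->
  exists x : nat -> R, (forall j, (j < p)%nat -> Rabs (x j) < mu) /\
    (forall j, (j < p)%nat -> Ereal p Ci w mu tau x j = 0).
Proof. intros HP HI Hm Ht.
  set (m := / (tau * mu^2)). assert (Hm0 : 0 < m) by (apply tm_pos; auto).
  assert (HK : 0 <= K2 p Ci) by (apply sumR_nonneg; intros; apply pow2_ge_0).
  set (lam := K2 p Ci / (2 * m) + 1).
  assert (Hl : 1 <= lam).
  { unfold lam. assert (0 <= K2 p Ci / (2*m)) by (apply Rmult_le_pos; auto; left; apply Rinv_0_lt_compat; lra). lra. }
  assert (H : 0 < tau /\ 0 < mu /\ 0 <= lam) by (repeat split; lra).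
  set (T := Tmap p Ci w mu tau lam H).
  set (q := (lam^2 + K2 p Ci) / (lam + m)^2).
  assert (Hq : 0 <= q < 1).
  { unfold q. split. apply Rmult_le_pos. nra. left; apply Rinv_0_lt_compat; nra.
    apply (Rmult_lt_reg_r ((lam + m)^2)). nra. unfold Rdiv. rewrite Rmult_assoc, Rinv_l by nra.
    rewrite Rmult_1_r, Rmult_1_l.
    assert (E : 2 * lam * m = K2 p Ci + 2 * m) by (unfold lam; field; lra). nra. }
  destruct (fixed_point p T q Hq) as [L HL].
  { intros u v. pose proof (Tcontr p C Ci w mu tau lam H u v HP HI). fold m in H0. fold T in H0.
    unfold q. apply (Rmult_le_reg_l ((lam + m)^2)). nra.
    replace ((lam + m) ^ 2 * ((lam ^ 2 + K2 p Ci) / (lam + m) ^ 2 * Nrm p (fun j => u j - v j)))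
      with ((lam ^ 2 + K2 p Ci) * Nrm p (fun j => u j - v j)) by (field; nra). auto. }
  exists L. split.
  - intros j Hj. rewrite <- HL by auto. unfold T, Tmap. apply psinv_spec.
  - intros j Hj. pose proof (HL j Hj) as E. unfold T, Tmap in E.
    pose proof (proj2 (psinv_spec mu tau lam H (lam * L j - sumR p (fun k => Ci j k * (L k - w k))))) as E2.
    rewrite E in E2. unfold psi in E2. unfold Ereal. lra.
Qed.

Lemma cpderiv_unique F z j (d1 d2 : Complex.C) : has_cpderiv F z j d1 -> has_cpderiv F z j d2 -> d1 = d2.
Proof. intros H1 H2.
  assert (Hsm : forall eps, 0 < eps -> Complex.Cmod (Complex.Cminus d1 d2) < 2 * eps).
  { intros eps Heps.
    destruct (H1 eps Heps) as [r1 [Hr1 K1]].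
    destruct (H2 eps Heps) as [r2 [Hr2 K2]].
    set (hh := Rmin r1 r2 / 2).
    assert (Hhh : 0 < hh < Rmin r1 r2). { unfold hh. pose proof (Rmin_pos r1 r2 Hr1 Hr2). lra. }
    pose proof (Rmin_l r1 r2). pose proof (Rmin_r r1 r2).
    assert (Hm : Defs.Cmod (Complex.RtoC hh) = hh).
    { change (Defs.Cmod (Complex.RtoC hh)) with (Complex.Cmod (Complex.RtoC hh)). rewrite Cmod_R. apply Rabs_right. lra. }
    specialize (K1 (Complex.RtoC hh) ltac:(rewrite Hm; lra)).
    specialize (K2 (Complex.RtoC hh) ltac:(rewrite Hm; lra)).
    set (Q := Defs.Cdiv (Csub (F (shift z j (Complex.RtoC hh))) (F z)) (Complex.RtoC hh)) in *.
    change (Defs.Cmod (Csub Q d1)) with (Complex.Cmod (Complex.Cminus Q d1)) in K1.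
    change (Defs.Cmod (Csub Q d2)) with (Complex.Cmod (Complex.Cminus Q d2)) in K2.
    assert (E : Complex.Cminus d1 d2 = Complex.Cplus (Complex.Cminus Q d2) (Complex.Copp (Complex.Cminus Q d1))).
    { destruct Q, d1, d2. apply injective_projections; simpl; ring. }
    rewrite E. eapply Rle_lt_trans. apply Cmod_triangle. rewrite Cmod_opp. lra. }
  assert (H0 : Complex.Cmod (Complex.Cminus d1 d2) = 0).
  { pose proof (Cmod_ge_0 (Complex.Cminus d1 d2)).
    destruct (Req_dec (Complex.Cmod (Complex.Cminus d1 d2)) 0); auto.
    specialize (Hsm (Complex.Cmod (Complex.Cminus d1 d2) / 4) ltac:(lra)). lra. }
  apply Cmod_eq_0 in H0. destruct d1, d2.
  apply (f_equal fst) in H0 as Ha. apply (f_equal snd) in H0 as Hb. simpl in Ha, Hb.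
  f_equal; lra.
Qed.

Lemma Dz_real_zero p Ci w mu tau (x : nat -> R) j : symmetric p Ci -> (j < p)%nat -> 0 < tau ->
  Rabs (x j) < mu -> Ereal p Ci w mu tau x j = 0 ->
  Dz p Ci w mu tau (fun k => (x k, 0)) j = Complex.RtoC 0.
Proof. intros HS Hj Ht Hx HE.
  assert (Ha : mu^2 - x j ^2 > 0) by (rewrite <- (pow2_abs (x j)); pose proof (Rabs_pos (x j)); simpl; nra).
  apply injective_projections.
  - rewrite Dz_split.
    change (fst (Complex.Cplus (Complex.Cplus ?A ?B) ?D)) with (fst A + fst B + fst D).
    rewrite fst_S1, fst_S2 by auto. rewrite last_fst by auto. cbn [fst Complex.RtoC].
    unfold Ereal, gfun in HE. unfold Rdiv in *.
    match goal with |- ?L = 0 => assert (E2 : L = 2 * (sumR p (fun k => Ci j k * (x k - w k)) + x j * / (mu ^ 2 - x j ^ 2) * / tau)) by ring end.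
    rewrite E2, HE. ring.
  - rewrite Dz_split.
    change (snd (Complex.Cplus (Complex.Cplus ?A ?B) ?D)) with (snd A + snd B + snd D).
    rewrite snd_S1, snd_S2 by auto. rewrite last_snd by (auto; nra). cbn [snd Complex.RtoC].
    rewrite (sumR_ext _ _ (fun _ => 0)) by (intros; ring). rewrite sumR_zero. field. nra.
Qed.

Theorem theorem1 (p : nat) (C Ci : nat -> nat -> R) (w : nat -> R) (mu tau : R)
  (hC : pos_def p C) (hCi : is_inverse p C Ci) (hmu : 0 < mu) (htau : 0 < tau) :
  exists u : nat -> Cx,
    (inD p mu u /\ is_critical p (H_tau p Ci w mu tau) u) /\
    (forall z : nat -> Cx, inD p mu z -> is_critical p (H_tau p Ci w mu tau) z ->
       forall j, (j < p)%nat -> z j = u j) /\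
    (forall j, (j < p)%nat -> Im (u j) = 0) /\
    (forall j, (j < p)%nat ->
       (mu ^ 2 - Re (u j) ^ 2) * sumR p (fun k => Ci j k * (w k - Re (u k)))
       - Re (u j) / tau = 0).
Proof.
  assert (HS : symmetric p Ci) by (apply (Ci_sym p C); auto; apply hC).
  destruct (real_exists p C Ci w mu tau hC hCi hmu htau) as [x [Hxb Hxe]].
  exists (fun k => (x k, 0)).
  split; [split|split; [|split]].
  - intros j Hj. unfold Re. simpl. auto.
  - intros j Hj. change (Defs.RtoC 0) with (Complex.RtoC 0). rewrite <- (Dz_real_zero p Ci w mu tau x j) by auto.
    apply H_deriv; auto. simpl. auto.
  - intros z Hz Hcr j Hj.
    assert (HD : forall j, (j < p)%nat -> Dz p Ci w mu tau z j = Complex.RtoC 0).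
    { intros i Hi. pose proof (H_deriv p Ci w mu tau z i Hi htau (Hz i Hi)) as A.
      pose proof (Hcr i Hi) as B. exact (cpderiv_unique _ _ _ _ _ A B). }
    destruct (crit_real p C Ci w mu tau z hC hCi htau Hz HD) as [Hy Hr].
    assert (Hfx : forall i, (i < p)%nat -> fst (z i) = x i).
    { apply (real_unique p C Ci w mu tau); auto. }
    rewrite <- (Hfx j Hj), <- (Hy j Hj). destruct (z j); auto.
  - intros j Hj. reflexivity.
  - intros j Hj. unfold Re. cbn [fst].
    specialize (Hxe j Hj). specialize (Hxb j Hj). unfold Ereal, gfun in Hxe.
    assert (Ha : mu^2 - x j ^2 > 0) by (rewrite <- (pow2_abs (x j)); pose proof (Rabs_pos (x j)); simpl; nra).
    assert (E : sumR p (fun k => Ci j k * (w k - x k)) = - sumR p (fun k => Ci j k * (x k - w k))).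
    { clear. induction p. simpl. ring. simpl. rewrite IHp. ring. }
    rewrite E.
    set (S := sumR p (fun k => Ci j k * (x k - w k))) in *.
    assert (S = - (x j / (mu^2 - x j^2) / tau)) by lra.
    rewrite H. field. split; lra.
Qed.
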